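(* Let $E=(e_1,\dots,e_{4n-1})$ be a positively oriented $J$-basis. The stem-quadrant $SQ(E)=\{\vec u\in\mathbb{R}^{4n-1}:\vec u+\mathcal{H}_E\subset\mathcal{H}_E\}$ equals the closed convex cone $\{-\alpha e_1+\beta e_{4n-1}:\alpha,\beta\ge0\}$ generated by $-e_1$ and $e_{4n-1}$.
   Context: $\mathbb{R}^{2n,2n-1}$ is $\mathbb{R}^{4n-1}$ with form $v^TJw$, $J$ antidiagonal with $J_{i,4n-i}=(-1)^i$; a $J$-basis is one in which the Gram matrix is $J$. For a nonzero vector $v$, $S^+_E(v)$ (resp. $S^-_E(v)$) is the number of sign changes of its coordinate sequence in $E$ when signs are assigned to zero coordinates so as to maximize (resp. minimize) this number. $\mathcal{H}_E=\{v: S^+_E(v)\le 2n-1$, and in case of equality the sign of the last coordinate used in computing $S^+_E$ is positive$\}$ (the open crooked halfspace); $\overline{\mathcal{H}}_E=\{v: S^-_E(v)\le 2n-1$, and in case of equality the last nonzero coordinate is positive$\}$ is its closure. *)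

(* Defs.v *)
(* Vectors of R^{4n-1} are row vectors 'rV[R]_(4*n-1);
   a basis E = (e_1,...,e_{4n-1}) is the matrix whose i-th row is e_{i+1}. *)
From HB Require Import structures.
From mathcomp Require Import all_boot all_order all_algebra.
Set Implicit Arguments. Unset Strict Implicit. Unset Printing Implicit Defensive.
Import Order.TTheory GRing.Theory Num.Theory.
Local Open Scope ring_scope.

Section Crooked.
Variable R : realFieldType.

(* The form matrix J of R^{2n,2n-1}: 1-based J_{i,4n-i} = (-1)^i, i.e.
   0-based entry (i,j) is (-1)^(i+1) when i + j = 4n-2, and 0 otherwise. *)
Definition Jmx (n : nat) : 'M[R]_(4 * n - 1) :=
  \matrix_(i, j) (if (i + j == 4 * n - 2)%N then (-1) ^+ (i.+1) else 0).

Definition Jform (n : nat) (v w : 'rV[R]_(4 * n - 1)) : R :=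
  (v *m Jmx n *m w^T) 0 0.

Definition is_Jbasis (n : nat) (E : 'M[R]_(4 * n - 1)) : Prop :=
  E *m Jmx n *m E^T = Jmx n.

Definition pos_oriented (m : nat) (E : 'M[R]_m) : Prop := 0 < \det E.

(* the k-th (0-based) basis vector, 0 if k is out of range *)
Definition rowk (m : nat) (E : 'M[R]_m) (k : nat) : 'rV[R]_m :=
  \row_j (if insub k is Some i then E i j else 0).

Definition coordseq (m : nat) (E : 'M[R]_m) (v : 'rV[R]_m) : seq R :=
  [seq (v *m invmx E) 0 i | i <- enum 'I_m].

(* s (true = +, false = -) is a sign assignment for c: it agrees with the
   signs of the nonzero entries; zero entries get arbitrary signs. *)
Definition sgn_compat (c : seq R) (s : seq bool) : bool :=
  all2 (fun (x : R) (b : bool) => ((0 < x) ==> b) && ((x < 0) ==> ~~ b)) c s.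

Definition nchanges (s : seq bool) : nat :=
  (\sum_(i < (size s).-1) (nth false s i != nth false s i.+1))%N.

Definition Splus (c : seq R) : nat :=
  (\max_(s : (size c).-tuple bool | sgn_compat c s) nchanges s)%N.

Definition inH (n : nat) (E : 'M[R]_(4 * n - 1)) (v : 'rV[R]_(4 * n - 1)) : Prop :=
  let c := coordseq E v in
  v != 0 /\
  ((Splus c < 2 * n - 1)%N \/
   (Splus c = (2 * n - 1)%N /\
    exists s : (size c).-tuple bool,
      [/\ sgn_compat c s, nchanges s = Splus c & nth false s (size c).-1 = true])).

Definition inSQ (n : nat) (E : 'M[R]_(4 * n - 1)) (u : 'rV[R]_(4 * n - 1)) : Prop :=
  forall v, inH E v -> inH E (u + v).

End Crooked.

(* Main.v *)
Require Import Defs.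
From HB Require Import structures.
From mathcomp Require Import all_boot all_order all_algebra zify ring lra.
Import Order.TTheory GRing.Theory Num.Theory.
Local Open Scope ring_scope.
Set Implicit Arguments. Unset Strict Implicit.

Section SeqTheory.
Variable R : realFieldType.

Definition cp (x : R) (b : bool) := ((0 < x) ==> b) && ((x < 0) ==> ~~ b).

Lemma compat_cons (x : R) t b s : sgn_compat (x :: t) (b :: s) = cp x b && sgn_compat t s.
Proof. by []. Qed.

Lemma compat_nil_r (c : seq R) : sgn_compat c [::] = (c == [::]).
Proof. by case: c. Qed.

Lemma compat_size (c : seq R) s : sgn_compat c s -> size s = size c.
Proof.
elim: c s => [|x t IH] [|b s] //= /andP [_ H]; by rewrite (IH _ H).
Qed.

Lemma compat_nthP (c : seq R) s : sgn_compat c s <->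
  size s = size c /\ forall i, (i < size c)%N -> cp (nth 0 c i) (nth false s i).
Proof.
elim: c s => [|x t IH] [|b s] //=; split => //.
- by case.
- by case.
- move=> /andP [H1 /IH [H2 H3]]; split; first by rewrite H2.
  by case=> [|i] //= /H3.
- case=> [[Hs] H]; apply/andP; split; first exact: (H 0%N).
  apply/IH; split => // i Hi; exact: (H i.+1).
Qed.

Lemma compat_map (c : seq R) : sgn_compat c [seq 0 < x | x <- c].
Proof.
elim: c => [|x t IH] //=; rewrite IH andbT /cp.
by case: ltrgtP.
Qed.

Lemma compat_strict (c : seq R) s : all (fun x => x != 0) c -> sgn_compat c s ->
  s = [seq 0 < x | x <- c].
Proof.
elim: c s => [|x t IH] [|b s] //= /andP [hx ht] /andP [H1 H2].
rewrite (IH _ ht H2); congr (_ :: _).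
move: H1; rewrite /cp; case: ltrgtP => //; last by move=> e; rewrite e eqxx in hx.
- by case: b.
- by case: b.
Qed.

Lemma Splus_ge (c : seq R) s : sgn_compat c s -> (nchanges s <= Splus c)%N.
Proof.
move=> H; have Hs : size s == size c by rewrite (compat_size H).
rewrite /Splus; exact: (leq_bigmax_cond (Tuple Hs)).
Qed.

Lemma Splus_le (c : seq R) k : (forall s, sgn_compat c s -> (nchanges s <= k)%N) ->
  (Splus c <= k)%N.
Proof. by move=> H; apply/bigmax_leqP => s /H. Qed.

Lemma Splus_ex (c : seq R) : exists s, sgn_compat c s /\ nchanges s = Splus c.
Proof.
have Hs : size [seq 0 < x | x <- c] == size c by rewrite size_map.
have Hc : (0 < #|[pred s : (size c).-tuple bool | sgn_compat c s]|)%N.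
  apply/card_gt0P; exists (Tuple Hs); rewrite inE /=; exact: compat_map.
have [t Ht Hm] := eq_bigmax_cond (fun s : (size c).-tuple bool => nchanges s) Hc.
exists t; split; first by move: Ht; rewrite inE.
by rewrite /Splus Hm.
Qed.

Lemma Splus_strict (c : seq R) : all (fun x => x != 0) c ->
  Splus c = nchanges [seq 0 < x | x <- c].
Proof.
move=> H; apply/eqP; rewrite eqn_leq; apply/andP; split.
- by apply: Splus_le => s Hs; rewrite -(compat_strict H Hs).
- exact/Splus_ge/compat_map.
Qed.

Definition Good (m : nat) (c : seq R) :=
  (Splus c < m)%N \/ (Splus c = m /\ exists s,
     [/\ sgn_compat c s, nchanges s = Splus c & nth false s (size c).-1]).

Lemma Good_le m (c : seq R) : Good m c -> (Splus c <= m)%N.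
Proof. by case=> [/ltnW|[->]]. Qed.

End SeqTheory.

Lemma nchanges0 : nchanges [::] = 0%N.
Proof. by rewrite /nchanges big_ord0. Qed.
Lemma nchanges1 a : nchanges [:: a] = 0%N.
Proof. by rewrite /nchanges big_ord0. Qed.
Lemma nchanges_cons2 a b s : nchanges [:: a, b & s] = ((a != b) + nchanges (b :: s))%N.
Proof. by rewrite /nchanges /= big_ord_recl. Qed.

Lemma nchanges_cons_le a s : (nchanges s <= nchanges (a :: s) <= (nchanges s).+1)%N.
Proof. case: s => [|b s]; first by rewrite nchanges0 nchanges1. rewrite nchanges_cons2; case: (a != b) => /=; lia. Qed.

Lemma nchanges_rcons s a : nchanges (rcons s a) =
  (nchanges s + (if s is [::] then 0 else (last a s != a)))%N.
Proof.
elim: s => [|x s IH]; first by rewrite nchanges0 nchanges1.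
case: s IH => [|y s] IH; first by rewrite /= nchanges1 nchanges_cons2 nchanges1; case: (x != a).
rewrite !rcons_cons in IH *; rewrite nchanges_cons2 IH [in RHS]nchanges_cons2 /=; lia.
Qed.

Lemma nchanges_rcons_le s a : (nchanges s <= nchanges (rcons s a) <= (nchanges s).+1)%N.
Proof. rewrite nchanges_rcons; case: s => [|x s]; first lia. case: (_ != _) => /=; lia. Qed.

Lemma nchanges_odd a s : odd (nchanges (a :: s)) = (a != last a s).
Proof.
elim: s a => [|b s IH] a; first by rewrite nchanges1 eqxx.
rewrite nchanges_cons2 oddD IH /=; by case: a; case: b; case: (last _ _).
Qed.

Lemma nchanges_mkseq (b : bool) (f : nat -> nat) k :
  (forall i, (i.+1 < k)%N -> f i.+1 = f i \/ f i.+1 = (f i).+1) ->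
  nchanges (mkseq (fun i => b (+) odd (f i)) k) = (f k.-1 - f 0)%N.
Proof.
move=> H; rewrite /nchanges size_mkseq.
have E : forall i : 'I_k.-1, ((nth false (mkseq (fun i => b (+) odd (f i)) k) i
     != nth false (mkseq (fun i => b (+) odd (f i)) k) i.+1) : nat) = (f i.+1 - f i)%N.
  move=> i; have hi := ltn_ord i.
  have hk : (i.+1 < k)%N by lia.
  rewrite !nth_mkseq //; last by lia.
  case: (H i hk) => ->; first by rewrite eqxx subnn.
  rewrite oddS; case: b; case: (odd (f i)) => /=; lia.
rewrite (eq_bigr _ (fun i _ => E i)) -(big_mkord xpredT (fun i => f i.+1 - f i)%N).
apply: telescope_sumn_in => // i /andP [_ hi].
case: (H i) => [|->|->] //; lia.
Qed.
Section Ops.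
Variable R : realFieldType.

Lemma compat_rcons (t : seq R) x r b : sgn_compat (rcons t x) (rcons r b) =
  sgn_compat t r && cp x b.
Proof.
elim: t r => [|y t IH] [|c r] /=.
- by rewrite andbT.
- by case: r => [|? ?]; rewrite andbF.
- by case: t {IH} => [|? ?]; rewrite andbF.
- by rewrite IH andbA.
Qed.

Lemma opA (m : nat) (x x' : R) (t : seq R) : odd m -> x' <= x ->
  Good m (x :: t) -> Good m (x' :: t).
Proof.
move=> hm hx HG.
have [s' [Hs' Ms']] := Splus_ex (x' :: t).
case: s' Hs' Ms' => [|b' r] //; rewrite compat_cons => /andP [Hb' Hr] Ms'.
have Hsr : size r = size t by rewrite (compat_size Hr).
case: HG => [HL | [HE [s [Hs Ms Ls]]]].
- case Hcb : (cp x b').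
  + left; rewrite -Ms'; apply: leq_ltn_trans HL; apply: Splus_ge.
    by rewrite compat_cons Hcb.
  + have [hb hx0] : b' = false /\ 0 < x.
      move: Hb' Hcb; rewrite /cp; case: b' Ms' => _ /=; rewrite ?implybT ?implybF ?andbT.
      * move=> h1 h2; exfalso; move: h2 => /negP; apply; apply/negP; rewrite -leNgt.
        rewrite -leNgt in h1; exact: le_trans hx.
      * by move=> _ /negbFE h; split.
    subst b'.
    have Ht : sgn_compat (x :: t) (true :: r).
      by rewrite compat_cons Hr andbT /cp hx0 /= ltNge (ltW hx0).
    have H1 := Splus_ge Ht.
    have H2 := nchanges_cons_le true r.
    have H3 := nchanges_cons_le false r.
    have Hle : (Splus (x' :: t) <= m)%N by rewrite -Ms'; lia.
    case: (ltngtP (Splus (x' :: t)) m) => // Heq; [by left | lia | ].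
    right; split => //; exists (false :: r); split => //.
      by rewrite compat_cons Hr andbT.
    rewrite /= -Hsr.
    have := nchanges_odd false r; rewrite Ms' Heq hm.
    case: r {Hr Ms' H1 H2 H3 Ht Hsr} => [|y r] //= /esym.
    by move=> h; rewrite (set_nth_default y) // -last_nth; move: h; case: (last y r).
- case: s Hs Ms Ls => [|b r0] //; rewrite compat_cons => /andP [Hb Hr0] Ms Ls.
  have Hr0s : size r0 = size t by rewrite (compat_size Hr0).
  have hlast : last b r0 = true.
    by move: Ls; rewrite /= -Hr0s (set_nth_default b) // -last_nth.
  have hb : b = false.
    have := nchanges_odd b r0; rewrite Ms HE hm hlast; by case: (b).
  subst b.
  have hx0 : x <= 0.
    by move: Hb; rewrite /cp implybT andbT implybF -leNgt.
  have Hall : forall s2, sgn_compat (x' :: t) s2 -> sgn_compat (x :: t) s2.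
    case=> [|b2 r2] //; rewrite !compat_cons => /andP [hb2 ->]; rewrite andbT.
    move: hb2; rewrite /cp => /andP [_ h2]; apply/andP; split.
      by apply/implyP => h; exfalso; move: hx0; rewrite leNgt h.
    apply/implyP => h; apply: (implyP h2); exact: le_lt_trans hx h.
  have Hle : (Splus (x' :: t) <= m)%N.
    by rewrite -HE; apply: Splus_le => s2 /Hall /Splus_ge.
  case: (ltngtP (Splus (x' :: t)) m) => // Heq; [by left | lia | ].
  right; split => //.
  case: (ltrgtP x' 0) => hx'.
  + exists (b' :: r); split => //; first by rewrite compat_cons Hb' Hr.
    have hb' : b' = false by move: Hb'; rewrite /cp hx' ltNge (ltW hx') /=; case: b' Ms'.
    subst b'.
    rewrite /= -Hsr.
    have := nchanges_odd false r; rewrite Ms' Heq hm.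
    case: r {Hr Ms' Hsr} => [|y r] //= /esym.
    by move=> h; rewrite (set_nth_default y) // -last_nth; move: h; case: (last y r).
  + exfalso; move: hx0; rewrite leNgt; move/negP; apply; exact: lt_le_trans hx.
  + exists (false :: r0); split => //.
      by rewrite compat_cons Hr0 andbT /cp hx' ltxx.
    by rewrite Ms Heq -HE.
Qed.

Lemma opB (m : nat) (x x' : R) (t : seq R) : x <= x' ->
  Good m (rcons t x) -> Good m (rcons t x').
Proof.
move=> hx HG.
have [s' [Hs' Ms']] := Splus_ex (rcons t x').
have Hss : size s' = (size t).+1 by rewrite (compat_size Hs') size_rcons.
case/lastP: s' Hs' Ms' Hss => [|r b'] //; rewrite compat_rcons => /andP [Hr Hb'] Ms' _.
have Hsr : size r = size t by rewrite (compat_size Hr).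
have nthL : forall r2 (b2 : bool), size r2 = size t ->
    nth false (rcons r2 b2) (size (rcons t x')).-1 = b2.
  by move=> r2 b2 h; rewrite size_rcons /= nth_rcons h ltnn eqxx.
case: HG => [HL | [HE [s [Hs Ms Ls]]]].
- case Hcb : (cp x b').
  + left; rewrite -Ms'; apply: leq_ltn_trans HL; apply: Splus_ge.
    by rewrite compat_rcons Hcb Hr.
  + have [hb hx0] : b' = true /\ x < 0.
      move: Hb' Hcb; rewrite /cp; case: b' Ms' => _ /=; rewrite ?implybT ?implybF ?andbT.
      * by move=> _ /negbFE.
      * move=> h1 h2; exfalso; move: h2 => /negP; apply; apply/negP; rewrite -leNgt.
        rewrite -leNgt in h1; exact: le_trans h1.
    subst b'.
    have Ht : sgn_compat (rcons t x) (rcons r false).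
      by rewrite compat_rcons Hr /cp hx0 /= implybF -leNgt (ltW hx0).
    have H1 := Splus_ge Ht.
    have H2 := nchanges_rcons_le r true.
    have H3 := nchanges_rcons_le r false.
    have Hle : (Splus (rcons t x') <= m)%N by rewrite -Ms'; lia.
    case: (ltngtP (Splus (rcons t x')) m) => // Heq; [by left | lia | ].
    right; split => //; exists (rcons r true); split => //.
      by rewrite compat_rcons Hr.
    by rewrite nthL.
- have Hss : size s = (size t).+1 by rewrite (compat_size Hs) size_rcons.
  case/lastP: s Hs Ms Ls Hss => [|r0 b] //; rewrite compat_rcons => /andP [Hr0 Hb] Ms Ls _.
  have Hr0s : size r0 = size t by rewrite (compat_size Hr0).
  have hb : b = true by move: Ls; rewrite size_rcons /= nth_rcons Hr0s ltnn eqxx.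
  subst b.
  have hx0 : 0 <= x by move: Hb; rewrite /cp /= implybT /= implybF -leNgt.
  have Hall : forall s2, sgn_compat (rcons t x') s2 -> sgn_compat (rcons t x) s2.
    move=> s2 H2; have := compat_size H2; rewrite size_rcons.
    case/lastP: s2 H2 => [|r2 b2] //; rewrite !compat_rcons => /andP [-> hb2] _ /=.
    move: hb2; rewrite /cp => /andP [h1 _]; apply/andP; split.
      apply/implyP => h; apply: (implyP h1); exact: lt_le_trans h hx.
    by apply/implyP => h; exfalso; move: hx0; rewrite leNgt h.
  have Hle : (Splus (rcons t x') <= m)%N.
    by rewrite -HE; apply: Splus_le => s2 /Hall /Splus_ge.
  case: (ltngtP (Splus (rcons t x')) m) => // Heq; [by left | lia | ].
  right; split => //.
  case: (ltrgtP x' 0) => hx'.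
  + exfalso; move: hx0; rewrite leNgt; move/negP; apply; exact: le_lt_trans hx hx'.
  + exists (rcons r b'); split => //; first by rewrite compat_rcons Hr Hb'.
    have hb' : b' = true by move: Hb'; rewrite /cp hx' /=; case: b' Ms'.
    by rewrite hb' nthL.
  + exists (rcons r0 true); split.
    * by rewrite compat_rcons Hr0 /cp hx' ltxx.
    * by rewrite Ms Heq -HE.
    * by rewrite nthL.
Qed.

End Ops.
Section Mat.
Variable R : realFieldType.
Variable N : nat.

Definition cs (x : 'rV[R]_N) : seq R := [seq x 0 i | i <- enum 'I_N].

Lemma size_cs x : size (cs x) = N.
Proof. by rewrite /cs size_map size_enum_ord. Qed.

Lemma nth_cs x (i : 'I_N) : nth 0 (cs x) i = x 0 i.
Proof. by rewrite /cs (nth_map i) ?size_enum_ord // nth_ord_enum. Qed.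

Lemma nth_cs_out x i : (N <= i)%N -> nth 0 (cs x) i = 0.
Proof. by move=> h; rewrite nth_default // size_cs. Qed.

Lemma map_cs (x : 'rV[R]_N) (P : R -> bool) (g : nat -> bool) :
  (forall i : 'I_N, P (x 0 i) = g i) -> [seq P y | y <- cs x] = mkseq g N.
Proof.
move=> H; rewrite /cs -map_comp /mkseq -val_enum_ord -map_comp.
by apply: eq_map => i /=; rewrite H.
Qed.

Lemma rowk_delta (E : 'M[R]_N) k (hk : (k < N)%N) :
  rowk E k = delta_mx 0 (Ordinal hk) *m E.
Proof.
apply/rowP => j; rewrite -rowE !mxE.
by rewrite (insubT (fun i => i < N)%N hk) /=.
Qed.

Lemma Good_nz m (x : 'rV[R]_N) : (m < N.-1)%N -> Good m (cs x) -> x != 0.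
Proof.
move=> hm HG; apply/negP => /eqP hx; subst x.
have Hc : sgn_compat (cs 0) (mkseq (fun i => false (+) odd i) N).
  apply/compat_nthP; rewrite size_mkseq size_cs; split => // i hi.
  by rewrite (nth_cs 0 (Ordinal hi)) mxE /cp ltxx.
have := Splus_ge Hc; rewrite (@nchanges_mkseq false id) /=; last by move=> i _; right.
have := Good_le HG; lia.
Qed.

End Mat.

Lemma inH_iff (R : realFieldType) (n : nat) (E : 'M[R]_(4 * n - 1)) v :
  (2 * n - 1 < (4 * n - 1).-1)%N ->
  inH E v <-> Good (2 * n - 1) (cs (v *m invmx E)).
Proof.
move=> hm; split.
- case=> _ [H|[H1 [s [H2 H3 H4]]]]; [by left | right; split => //].
  by exists s.
- move=> HG; split.
    apply/negP => /eqP hv; move: (Good_nz hm HG); by rewrite hv mul0mx eqxx.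
  case: HG => [H|[H1 [s [H2 H3 H4]]]]; [by left | right; split => //].
  have Hs : size s == size (coordseq E v) by rewrite (compat_size H2).
  by exists (Tuple Hs).
Qed.
Lemma opA' (R : realFieldType) m (c c' : seq R) : odd m -> size c' = size c ->
  (forall i, (0 < i)%N -> nth 0 c' i = nth 0 c i) -> nth 0 c' 0 <= nth 0 c 0 ->
  Good m c -> Good m c'.
Proof.
case: c c' => [|x t] [|x' t'] //= hm [hs] H hx HG.
have -> : t' = t.
  apply: (@eq_from_nth _ 0) => // i _; exact: (H i.+1).
exact: opA HG.
Qed.

Lemma opB' (R : realFieldType) m (c c' : seq R) : size c' = size c ->
  (forall i, (i < (size c).-1)%N -> nth 0 c' i = nth 0 c i) ->
  nth 0 c (size c).-1 <= nth 0 c' (size c).-1 ->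
  Good m c -> Good m c'.
Proof.
case/lastP: c => [|t x]; case/lastP: c' => [|t' x'] //; rewrite ?size_rcons;
  try by move=> /eqP.
move=> [hs] /= H.
rewrite !nth_rcons hs !ltnn !eqxx => hx HG.
have -> : t' = t.
  apply: (@eq_from_nth _ 0) => // i hi.
  have hi' : (i < size t)%N by rewrite -hs.
  by have := H i hi'; rewrite !nth_rcons hs hi'.
exact: opB HG.
Qed.

Lemma pos_eq (R : realFieldType) (x : R) (b : bool) :
  (b -> 0 < x) -> (~~ b -> x < 0) -> (0 < x) = b /\ x != 0.
Proof.
case: b => [h _|_ h]; have := h isT => hx.
- by split; [ | rewrite gt_eqF].
- by split; [ apply/negbTE; rewrite -leNgt ltW | rewrite lt_eqF].
Qed.

Lemma ctr (R : realFieldType) (n : nat) (E : 'M[R]_(4 * n - 1)) u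
  (sg tu : nat -> bool) (p : 'I_(4 * n - 1)) :
  E \in unitmx -> (2 * n - 1 < (4 * n - 1).-1)%N -> inSQ E u ->
  (forall i, (i < 4 * n - 1)%N -> tu i = sg i (+) (i == p)) ->
  (u *m invmx E) 0 p != 0 -> (0 < (u *m invmx E) 0 p) = tu p ->
  ((nchanges (mkseq sg (4 * n - 1)) < 2 * n - 1)%N \/
     (nchanges (mkseq sg (4 * n - 1)) = (2 * n - 1)%N /\ sg (4 * n - 1).-1)) ->
  (2 * n - 1 < nchanges (mkseq tu (4 * n - 1)))%N -> False.
Proof.
move=> hE hm HSQ Htu hd0 hdp Hsg Htau.
have [d Hd] : {d | d = u *m invmx E} by exists (u *m invmx E).
rewrite -Hd in hd0 hdp.
pose h (i : 'I_(4 * n - 1)) : R := if val i == val p then - (d 0 i) / 2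
   else (if sg i then `|d 0 i| + 1 else - (`|d 0 i| + 1)).
pose c : 'rV[R]_(4 * n - 1) := \row_i h i.
have Hfacts : forall i : 'I_(4 * n - 1),
  [/\ (0 < c 0 i) = sg i, c 0 i != 0, (0 < (d + c) 0 i) = tu i & (d + c) 0 i != 0].
  move=> i; rewrite !mxE /h.
  have n1 := ler_norm (d 0 i); have n2 := ler_norm (- d 0 i); rewrite normrN in n2.
  case: eqP => hip.
  + have -> : i = p by apply: val_inj.
    have Hsp : sg p = ~~ tu p by rewrite Htu // eqxx addbT negbK.
    rewrite Hsp -hdp.
    have : d 0 p != 0 by [].
    case: (ltrgtP (d 0 p) 0) => hl _ //.
    * have [A1 A2] := @pos_eq _ (- d 0 p / 2) (~~ false) (fun _ => ltac:(lra)) (fun f => ltac:(done)).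
      have [A3 A4] := @pos_eq _ (d 0 p + - d 0 p / 2) false (fun f => ltac:(done)) (fun _ => ltac:(lra)).
      by split.
    * have [A1 A2] := @pos_eq _ (- d 0 p / 2) (~~ true) (fun f => ltac:(done)) (fun _ => ltac:(lra)).
      have [A3 A4] := @pos_eq _ (d 0 p + - d 0 p / 2) true (fun _ => ltac:(lra)) (fun f => ltac:(done)).
      by split.
  + have Hti : tu i = sg i by rewrite Htu // (negbTE (introN eqP hip)) addbF.
    rewrite Hti; case: (sg i).
    * have [A1 A2] := @pos_eq _ (`|d 0 i| + 1) true (fun _ => ltac:(lra)) (fun f => ltac:(done)).
      have [A3 A4] := @pos_eq _ (d 0 i + (`|d 0 i| + 1)) true (fun _ => ltac:(lra)) (fun f => ltac:(done)).
      by split.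
    * have [A1 A2] := @pos_eq _ (- (`|d 0 i| + 1)) false (fun f => ltac:(done)) (fun _ => ltac:(lra)).
      have [A3 A4] := @pos_eq _ (d 0 i + - (`|d 0 i| + 1)) false (fun f => ltac:(done)) (fun _ => ltac:(lra)).
      by split.
have Hsig : [seq 0 < y | y <- cs c] = mkseq sg (4 * n - 1).
  by apply: map_cs => i; case: (Hfacts i).
have Htau' : [seq 0 < y | y <- cs (d + c)] = mkseq tu (4 * n - 1).
  by apply: map_cs => i; case: (Hfacts i).
have Hnz : all (fun y => y != 0) (cs c).
  by apply/allP => y /mapP [i _ ->]; case: (Hfacts i).
pose v := c *m E.
have Hv : inH E v.
  apply/inH_iff => //; rewrite /v mulmxK //.
  rewrite /Good (Splus_strict Hnz) Hsig.
  case: Hsg => [H|[H1 H2]]; [by left | right; split => //].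
  exists (mkseq sg (4 * n - 1)); split => //; first by rewrite -Hsig; exact: compat_map.
  rewrite size_cs nth_mkseq //; lia.
have := HSQ v Hv; move/(inH_iff _ _ hm); rewrite mulmxDl /v mulmxK // -Hd => HG.
have := Good_le HG; have := Splus_ge (compat_map (cs (d + c))); rewrite Htau'; lia.
Qed.
Lemma flipX (b : bool) (x p i : nat) :
  b (+) odd (x + ((p <= i) + (p < i))) = (b (+) odd x) (+) (i == p).
Proof.
by case: (ltngtP p i) => h; rewrite oddD /=; case: b; case: (odd x).
Qed.

Lemma flip0 (x i : nat) :
  true (+) odd (x + (0 < i)) = (false (+) odd x) (+) (i == 0).
Proof. case: i => [|i] /=; rewrite ?addn0 ?addn1 ?oddS; by case: (odd x). Qed.

Lemma flipL (b : bool) (x q i : nat) : (i < q.+1)%N ->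
  b (+) odd (x + (q <= i)) = (b (+) odd x) (+) (i == q).
Proof.
move=> hi; case: (ltngtP q i) => h; rewrite oddD /=; try lia; by case: b; case: (odd x).
Qed.

Lemma odd2 k : odd (2 * k) = false.
Proof. by rewrite oddM. Qed.

Unset Implicit Arguments.
Set Strict Implicit.

Theorem proposition5p5 (R : realFieldType) (n : nat) (E : 'M[R]_(4 * n - 1)) :
  (0 < n)%N -> is_Jbasis E -> pos_oriented E ->
  forall u : 'rV[R]_(4 * n - 1),
    inSQ E u <->
    exists alpha beta : R,
      [/\ 0 <= alpha, 0 <= beta &
          u = - alpha *: rowk E 0 + beta *: rowk E (4 * n - 2)].
Proof.
move=> hn _ hpos u.
have hE : E \in unitmx by rewrite unitmxE unitfE gt_eqF.
have hm : (2 * n - 1 < (4 * n - 1).-1)%N by lia.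
have h0 : (0 < 4 * n - 1)%N by lia.
have hL : (4 * n - 2 < 4 * n - 1)%N by lia.
pose o0 := Ordinal h0; pose oL := Ordinal hL.
have rk0 : rowk E 0 = delta_mx 0 o0 *m E := rowk_delta E h0.
have rkL : rowk E (4 * n - 2) = delta_mx 0 oL *m E := rowk_delta E hL.
have o0L : (o0 == oL) = false by apply/eqP => /(congr1 val) /=; lia.
have hodd : odd (2 * n - 1).
  by rewrite (_ : (2 * n - 1 = (2 * (n - 1)).+1)%N) ?oddS ?odd2 //; lia.
split.
- move=> HSQ.
  have [d Hd] : {d | d = u *m invmx E} by exists (u *m invmx E).
  have Hmid : forall j : 'I_(4 * n - 1), (0 < j)%N -> (j < 4 * n - 2)%N -> d 0 j = 0.
    move=> j hj1 hj2; apply/eqP; apply/negP => /negP hdj.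
    case: (leqP j (2 * n - 1)) => hjp.
    + apply: (@ctr R n E u
        (fun i => ~~ (0 < d 0 j) (+) odd (minn (2 * n - 2) (i - j.+1)))
        (fun i => ~~ (0 < d 0 j) (+) odd (minn (2 * n - 2) (i - j.+1) + ((j <= i) + (j < i))))
        j hE hm HSQ).
      * by move=> i _; rewrite flipX.
      * by rewrite -Hd.
      * rewrite -Hd flipX eqxx (_ : minn (2 * n - 2) (j - j.+1) = 0%N); last by lia.
        by case: (0 < d 0 j).
      * left; rewrite (@nchanges_mkseq _ (fun i => minn (2 * n - 2) (i - j.+1))); first by lia.
        move=> i hi; lia.
      * rewrite (@nchanges_mkseq _ (fun i => minn (2 * n - 2) (i - j.+1) + ((j <= i) + (j < i)))%N);
          first by lia.
        move=> i hi; lia.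
    + apply: (@ctr R n E u
        (fun i => ~~ (0 < d 0 j) (+) odd (minn (2 * n - 2) (i + (2 * n - 2) - j.-1)))
        (fun i => ~~ (0 < d 0 j) (+) odd (minn (2 * n - 2) (i + (2 * n - 2) - j.-1) + ((j <= i) + (j < i))))
        j hE hm HSQ).
      * by move=> i _; rewrite flipX.
      * by rewrite -Hd.
      * rewrite -Hd flipX eqxx (_ : minn (2 * n - 2) (j + (2 * n - 2) - j.-1) = 2 * (n - 1))%N; last by lia.
        by rewrite odd2; case: (0 < d 0 j).
      * left; rewrite (@nchanges_mkseq _ (fun i => minn (2 * n - 2) (i + (2 * n - 2) - j.-1))); first by lia.
        move=> i hi; lia.
      * rewrite (@nchanges_mkseq _ (fun i => minn (2 * n - 2) (i + (2 * n - 2) - j.-1) + ((j <= i) + (j < i)))%N);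
          first by lia.
        move=> i hi; lia.
  have Hfirst : ~ (0 < d 0 o0).
    move=> hpos0.
    apply: (@ctr R n E u
        (fun i => false (+) odd (minn (2 * n - 1) (i - 1)))
        (fun i => true (+) odd (minn (2 * n - 1) (i - 1) + (0 < i)))
        o0 hE hm HSQ).
    * by move=> i _; rewrite flip0.
    * by rewrite -Hd gt_eqF.
    * by rewrite -Hd hpos0.
    * right; rewrite (@nchanges_mkseq _ (fun i => minn (2 * n - 1) (i - 1))); last by move=> i hi; lia.
      split; first by lia.
      by rewrite (_ : minn (2 * n - 1) ((4 * n - 1).-1 - 1) = 2 * n - 1)%N //; lia.
    * rewrite (@nchanges_mkseq _ (fun i => minn (2 * n - 1) (i - 1) + (0 < i))%N); first by lia.
      move=> i hi; lia.
  have Hlast : ~ (d 0 oL < 0).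
    move=> hneg.
    apply: (@ctr R n E u
        (fun i => false (+) odd (minn (2 * n - 1) i))
        (fun i => false (+) odd (minn (2 * n - 1) i + (4 * n - 2 <= i)))
        oL hE hm HSQ).
    * by move=> i hi; rewrite flipL //; lia.
    * by rewrite -Hd lt_eqF.
    * rewrite -Hd /= leqnn addn1 (_ : minn (2 * n - 1) (4 * n - 2) = 2 * n - 1)%N; last by lia.
      by rewrite oddS hodd /=; apply/negbTE; rewrite -leNgt ltW.
    * right; rewrite (@nchanges_mkseq _ (fun i => minn (2 * n - 1) i)); last by move=> i hi; lia.
      split; first by lia.
      by rewrite (_ : minn (2 * n - 1) ((4 * n - 1).-1) = 2 * n - 1)%N //; lia.
    * rewrite (@nchanges_mkseq _ (fun i => minn (2 * n - 1) i + (4 * n - 2 <= i))%N); first by lia.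
      move=> i hi; lia.
  exists (- d 0 o0), (d 0 oL); split.
  + by rewrite oppr_ge0 leNgt; apply/negP.
  + by rewrite leNgt; apply/negP.
  have Hu : u = d *m E by rewrite Hd mulmxKV.
  have Hdd : d = (d 0 o0) *: delta_mx 0 o0 + (d 0 oL) *: delta_mx 0 oL.
    apply/rowP => j; rewrite !mxE /=.
    case: (eqVneq j o0) => [->|h1]; first by rewrite ?eqxx o0L mulr1 mulr0 addr0.
    case: (eqVneq j oL) => [->|h2]; first by rewrite mulr1 mulr0 add0r.
    rewrite !mulr0 addr0; apply: Hmid.
    * by rewrite lt0n; apply: contra h1 => /eqP hj; apply/eqP/val_inj.
    * move: h2 (ltn_ord j); rewrite -(inj_eq val_inj) /=; lia.
  by rewrite Hu {1}Hdd mulmxDl -!scalemxAl rk0 rkL opprK.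
- case=> [alpha [beta [ha hb ->]]] v Hv.
  apply/(inH_iff _ _ hm); move/(inH_iff _ _ hm): Hv => Hv.
  have [y Hy] : {y | y = v *m invmx E} by exists (v *m invmx E).
  rewrite -Hy in Hv.
  rewrite !mulmxDl rk0 rkL -!scalemxAl !mulmxK // -Hy.
  apply: (@opB' _ _ (cs (- alpha *: delta_mx 0 o0 + y))).
  + by rewrite !size_cs.
  + move=> i; rewrite size_cs => hi.
    have hi' : (i < 4 * n - 1)%N by lia.
    have -> : i = val (Ordinal hi') by [].
    rewrite !nth_cs !mxE /=.
    have -> : (Ordinal hi' == oL) = false by apply/eqP => /(congr1 val) /=; lia.
    by rewrite mulr0 addr0.
  + rewrite size_cs.
    have -> : (4 * n - 1).-1 = val oL by rewrite /=; lia.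
    rewrite !nth_cs !mxE /= eq_sym o0L eqxx mulr0 mulr1.
    lra.
  apply: (@opA' _ _ (cs y)) => //.
  + by rewrite !size_cs.
  + move=> i hi; case: (ltnP i (4 * n - 1)) => hi'; last by rewrite !nth_cs_out.
    have -> : i = val (Ordinal hi') by [].
    rewrite !nth_cs !mxE /=.
    have -> : (Ordinal hi' == o0) = false by apply/eqP => /(congr1 val) /=; lia.
    by rewrite mulr0 add0r.
  + rewrite !(nth_cs _ o0) !mxE /= mulr1.
    lra.
Qed.
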